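(* Let $D$ be a division algebra and let $S$ be a ring extension of $D$ which is automorphically normalizable over $D$. If $S$ is a division algebra, then $S$ is finitely generated as a left $D$-module.
   Context: All rings are associative with unity. For a ring $S\supseteq D$, $a\in S$ is automorphic over $D$ with respect to $\tau\in\mathrm{Aut}(D)$ if $ab=\tau(b)a$ for all $b\in D$. Commuting $a_1,\ldots,a_m\in S$ are (left) algebraically independent over $D$ if the monomials $a_1^{i_1}\cdots a_m^{i_m}$ are left linearly independent over $D$. $S$ is automorphically normalizable over $D$ if there exist $m\ge0$ and commuting $a_1,\ldots,a_m\in S$, automorphic over $D$ with respect to pairwise commuting automorphisms $\tau_1,\ldots,\tau_m$ of $D$, left algebraically independent over $D$, such that $S$ is finitely generated as a left module over the subring $D[a_1,\ldots,a_m]$ generated by $D\cup\{a_1,\ldots,a_m\}$. *)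

(* Defs.v *)
From HB Require Import structures.
From mathcomp Require Import all_boot all_order all_algebra.
Set Implicit Arguments. Unset Strict Implicit. Unset Printing Implicit Defensive.
Import GRing.Theory.
Local Open Scope ring_scope.

(* A division ring: every nonzero element is invertible
   (unitRingType already guarantees 1 != 0). *)
Definition is_division_ring (R : unitRingType) : Prop :=
  forall x : R, x != 0 -> x \is a GRing.unit.

Definition is_ring_aut (D : unitRingType) (tau : D -> D) : Prop :=
  [/\ forall x y, tau (x + y) = tau x + tau y,
      forall x y, tau (x * y) = tau x * tau y,
      tau 1 = 1 & bijective tau].

Definition automorphic (D S : unitRingType) (f : D -> S) (tau : D -> D) (a : S)
  : Prop := forall b : D, a * f b = f (tau b) * a.

Definition monomial (S : unitRingType) (m : nat) (a : 'I_m -> S)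
  (e : 'I_m -> nat) : S := \prod_(i < m) a i ^+ e i.

(* Left algebraic independence over D: the monomials are left linearly
   independent over D (every finite family of exponent vectors lies in some
   box {0..N-1}^m, so quantifying over all boxes covers all finite families). *)
Definition left_alg_indep (D S : unitRingType) (f : D -> S) (m : nat)
  (a : 'I_m -> S) : Prop :=
  forall (N : nat) (c : {ffun 'I_m -> 'I_N} -> D),
    \sum_(e : {ffun 'I_m -> 'I_N}) f (c e) * monomial a (fun i => nat_of_ord (e i)) = 0 ->
    forall e, c e = 0.

Definition subring_pred (S : unitRingType) (P : S -> Prop) : Prop :=
  [/\ P 1, forall x y, P x -> P y -> P (x - y) & forall x y, P x -> P y -> P (x * y)].

Definition gen_subring (D S : unitRingType) (f : D -> S) (m : nat)
  (a : 'I_m -> S) (x : S) : Prop :=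
  forall P : S -> Prop, subring_pred P ->
    (forall d, P (f d)) -> (forall i, P (a i)) -> P x.

Definition fg_left_module_over (S : unitRingType) (T : S -> Prop) : Prop :=
  exists (n : nat) (s : 'I_n -> S), forall x : S,
    exists t : 'I_n -> S, (forall i, T (t i)) /\ x = \sum_(i < n) t i * s i.

Definition fg_left_D_module (D S : unitRingType) (f : D -> S) : Prop :=
  exists (n : nat) (s : 'I_n -> S), forall x : S,
    exists c : 'I_n -> D, x = \sum_(i < n) f (c i) * s i.

Definition automorphically_normalizable (D S : unitRingType) (f : D -> S) : Prop :=
  exists (m : nat) (a : 'I_m -> S) (tau : 'I_m -> D -> D),
    (forall i j, a i * a j = a j * a i) /\
    (forall i, is_ring_aut (tau i)) /\
    (forall i j x, tau i (tau j x) = tau j (tau i x)) /\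
    (forall i, automorphic f (tau i) (a i)) /\
    left_alg_indep f a /\
    fg_left_module_over (gen_subring f a).

(* Main.v *)
Require Import Defs.
From HB Require Import structures.
From mathcomp Require Import all_boot all_order all_algebra.
From mathcomp Require Import zify.
From Stdlib Require Import ClassicalEpsilon Classical.
Set Implicit Arguments. Unset Strict Implicit. Unset Printing Implicit Defensive.
Import GRing.Theory.
Local Open Scope ring_scope.

Section Arith.
Local Open Scope nat_scope.
Lemma ar_key m t : m <= t -> t.+1 ^ m * (t - m) <= t ^ m * t.
Proof.
elim: m => [|m IH] mt; first by rewrite !expn0 !mul1n subn0.
have IH' := IH (ltnW mt).
rewrite !expnS.
have H1 : t.+1 * (t - m.+1) <= t * (t - m) by nia.
have H2 : t.+1 ^ m * (t.+1 * (t - m.+1)) <= t.+1 ^ m * (t * (t - m)) by apply: leq_mul.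
have H3 : t * (t.+1 ^ m * (t - m)) <= t * (t ^ m * t) by apply: leq_mul.
nia.
Qed.

Lemma ar_count n m d : 0 < d ->
  n * (d * (n.+1 * m).+1 + d) ^ m < n.+1 * (d * (n.+1 * m).+1) ^ m.
Proof.
move=> d0; set t := (n.+1 * m).+1.
have -> : d * t + d = d * t.+1 by rewrite mulnS addnC.
rewrite !expnMn.
have dm : 0 < d ^ m by rewrite expn_gt0 d0.
suff H : n * t.+1 ^ m < n.+1 * t ^ m.
  set X := t.+1 ^ m in H *; set Y := t ^ m in H *; set Z := d ^ m in dm *; nia.
have mt : m <= t by rewrite /t; nia.
have K := @ar_key m t mt.
have tm : t - m = (n * m).+1 by rewrite /t; lia.
rewrite tm in K.
have tpos : 0 < t ^ m by rewrite expn_gt0.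
set X := t.+1 ^ m in K *; set Y := t ^ m in K tpos *.
have : n * (X * (n * m).+1) <= n * (Y * t) by apply: leq_mul.
rewrite /t; nia.
Qed.
End Arith.

Section LinAlg.
Variable K : unitRingType.
Hypothesis Kdiv : is_division_ring K.

Lemma LA_n (A : eqType) n (eqs : seq (A -> K)) (vars : seq A) :
  (size eqs <= n)%N -> uniq vars -> (size eqs < size vars)%N ->
  exists y : A -> K, (exists2 v, v \in vars & y v != 0) /\
    forall phi, List.In phi eqs -> \sum_(v <- vars) y v * phi v = 0.
Proof.
elim: n eqs vars => [|n IH] [|phi eqs] vars //= szn uv sz.
- exists (fun _ => 1); split => //.
  case: vars uv sz => [|v vars] //= _ _; exists v; first by rewrite inE eqxx.
  exact: oner_neq0.
- exists (fun _ => 1); split => //.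
  case: vars uv sz => [|v vars] //= _ _; exists v; first by rewrite inE eqxx.
  exact: oner_neq0.
case: (boolP (all (fun v => phi v == 0) vars)) => [/allP H0|].
  have [y [ny Hy]] := IH eqs vars szn uv (ltnW sz).
  exists y; split => // psi [<-|/Hy //].
  by rewrite big1_seq // => v /andP [_ /H0 /eqP ->]; rewrite mulr0.
move/allPn => [a0 a0in nz].
pose vars' := [seq v <- vars | v != a0].
have uv' : uniq vars' by apply: filter_uniq.
have szv : size vars = (size vars').+1.
  have := count_predC (pred1 a0) vars.
  by rewrite count_uniq_mem // a0in size_filter => <-; rewrite add1n.
pose c := (phi a0)^-1.
have cphi : c * phi a0 = 1 by apply: mulVr; apply: Kdiv.
pose eqs' := [seq (fun v => psi v - phi v * c * psi a0) | psi <- eqs].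
have [y' [[v vin ny'] Hy']] : exists y : A -> K, (exists2 v, v \in vars' & y v != 0) /\
    forall phi, List.In phi eqs' -> \sum_(v <- vars') y v * phi v = 0.
  by apply: IH => //; rewrite size_map; move: sz; rewrite szv /=.
pose sF (F : A -> K) := \sum_(w <- vars') y' w * F w.
pose y := fun w => if w == a0 then - sF phi * c else y' w.
have decomp F : \sum_(w <- vars) y w * F w = y a0 * F a0 + sF F.
  rewrite (bigD1_seq a0) //; congr (_ + _); rewrite /sF big_filter.
  by apply: eq_bigr => w /negbTE wa; rewrite /y wa.
exists y; split.
  exists v; first by move: vin; rewrite mem_filter => /andP [].
  by move: vin; rewrite mem_filter /y => /andP [/negbTE -> _].
move=> psi [<-|psiin].
  by rewrite decomp /y eqxx -mulrA cphi mulr1 addNr.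
have := Hy' (fun v => psi v - phi v * c * psi a0) (List.in_map _ _ _ psiin).
rewrite (eq_bigr (fun w => y' w * psi w - (y' w * phi w) * (c * psi a0))); last first.
  by move=> w _ /=; rewrite mulrBr !mulrA.
rewrite sumrB -mulr_suml -/(sF psi) -/(sF phi) => /eqP; rewrite subr_eq0 => /eqP E.
by rewrite decomp /y eqxx E !mulNr mulrA addNr.
Qed.
Lemma LA (A : eqType) (eqs : seq (A -> K)) (vars : seq A) :
  uniq vars -> (size eqs < size vars)%N ->
  exists y : A -> K, (exists2 v, v \in vars & y v != 0) /\
    forall phi, List.In phi eqs -> \sum_(v <- vars) y v * phi v = 0.
Proof. exact: (@LA_n A (size eqs)). Qed.
End LinAlg.

Section Generic.
Variables (D S : unitRingType) (f : D -> S).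
Hypothesis fD : forall x y, f (x + y) = f x + f y.
Hypothesis fM : forall x y, f (x * y) = f x * f y.
Hypothesis f1 : f 1 = 1.
Variables (m : nat) (a : 'I_m -> S) (tau : 'I_m -> D -> D).
Hypothesis acomm : forall i j, a i * a j = a j * a i.
Hypothesis aut : forall i b, a i * f b = f (tau i b) * a i.

Lemma f0 : f 0 = 0.
Proof. by apply: (addrI (f 0)); rewrite -fD !addr0. Qed.

Lemma fN x : f (- x) = - f x.
Proof. by apply: (addrI (f x)); rewrite -fD !subrr f0. Qed.

Lemma fB x y : f (x - y) = f x - f y.
Proof. by rewrite fD fN. Qed.

Lemma f_sum (I : Type) (r : seq I) (P : pred I) (F : I -> D) :
  f (\sum_(i <- r | P i) F i) = \sum_(i <- r | P i) f (F i).
Proof. by apply: (big_morph f fD f0). Qed.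

Definition exps := {ffun 'I_m -> nat}.
Definition mono (e : exps) : S := monomial a e.
Definition e0 : exps := [ffun => 0%N].
Definition eadd (e e' : exps) : exps := [ffun i => (e i + e' i)%N].
Definition edelta (i : 'I_m) (k : nat) : exps := [ffun j => if j == i then k else 0%N].

Lemma comm_pows i j k l : GRing.comm (a j ^+ k) (a i ^+ l).
Proof.
apply: commrX; apply/commr_sym; apply: commrX; exact: acomm.
Qed.

Lemma prod_comm_mul (r : seq 'I_m) (E E' : 'I_m -> nat) :
  \prod_(i <- r) a i ^+ E i * \prod_(i <- r) a i ^+ E' i
  = \prod_(i <- r) a i ^+ (E i + E' i).
Proof.
elim: r => [|i r IH]; first by rewrite !big_nil mul1r.
rewrite !big_cons exprD -IH.
have C : GRing.comm (\prod_(j <- r) a j ^+ E j) (a i ^+ E' i).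
  by apply: commr_sym; apply: commr_prod => j _; apply: commr_sym; apply: comm_pows.
by rewrite -!mulrA; congr (_ * _); rewrite !mulrA C.
Qed.

Lemma mono_add E E' : mono E * mono E' = mono (eadd E E').
Proof.
rewrite /mono /monomial prod_comm_mul; apply: eq_bigr => i _; by rewrite ffunE.
Qed.

Lemma apow_f i k d : a i ^+ k * f d = f (iter k (tau i) d) * a i ^+ k.
Proof.
elim: k => [|k IH]; first by rewrite !expr0 mul1r mulr1.
by rewrite exprS -mulrA IH mulrA aut /= -mulrA -exprS.
Qed.

Definition tauL (r : seq 'I_m) (E : 'I_m -> nat) (d : D) : D :=
  foldr (fun i x => iter (E i) (tau i) x) d r.

Lemma prod_f (r : seq 'I_m) (E : 'I_m -> nat) d :
  \prod_(i <- r) a i ^+ E i * f d = f (tauL r E d) * \prod_(i <- r) a i ^+ E i.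
Proof.
elim: r => [|i r IH]; first by rewrite !big_nil mul1r mulr1.
by rewrite !big_cons -mulrA IH mulrA apow_f -mulrA.
Qed.

Definition tauE (E : exps) (d : D) : D := tauL (index_enum 'I_m) E d.

Lemma mono_f E d : mono E * f d = f (tauE E d) * mono E.
Proof. exact: prod_f. Qed.

Lemma mono0 : mono e0 = 1.
Proof. by rewrite /mono /monomial big1 // => i _; rewrite ffunE expr0. Qed.

Lemma prod_delta i k (r : seq 'I_m) :
  \prod_(j <- r) a j ^+ (edelta i k j) = a i ^+ (k * count_mem i r).
Proof.
elim: r => [|j r IH]; first by rewrite big_nil muln0 expr0.
rewrite big_cons IH /= ffunE; case: (eqVneq j i) => [->|ji] /=.
  by rewrite ?eqxx -exprD mulnDr muln1 addnC.
by rewrite expr0 mul1r add0n.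
Qed.

Lemma mono_delta i k : mono (edelta i k) = a i ^+ k.
Proof.
have H := prod_delta i k (index_enum 'I_m).
have Hc : count_mem i (index_enum 'I_m) = 1%N.
  by rewrite count_uniq_mem ?index_enum_uniq // mem_index_enum.
by rewrite Hc muln1 in H; exact: H.
Qed.

Definition Rsum (L : seq (D * exps)) : S := \sum_(p <- L) f p.1 * mono p.2.
Definition coef (L : seq (D * exps)) (E : exps) : D := \sum_(p <- L | p.2 == E) p.1.

Lemma Rsum_cat L1 L2 : Rsum (L1 ++ L2) = Rsum L1 + Rsum L2.
Proof. by rewrite /Rsum big_cat. Qed.

Definition negL (L : seq (D * exps)) := [seq (- p.1, p.2) | p <- L].

Lemma Rsum_neg L : Rsum (negL L) = - Rsum L.
Proof. by rewrite /Rsum big_map -sumrN; apply: eq_bigr => p _ /=; rewrite fN mulNr. Qed.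

Definition prodL (L1 L2 : seq (D * exps)) :=
  [seq (p.1 * tauE p.2 q.1, eadd p.2 q.2) | p <- L1, q <- L2].

Lemma Rsum_mul L1 L2 : Rsum L1 * Rsum L2 = Rsum (prodL L1 L2).
Proof.
rewrite /Rsum /prodL big_allpairs_dep mulr_suml; apply: eq_bigr => p _.
rewrite mulr_sumr; apply: eq_bigr => q _ /=.
by rewrite fM -mulrA (mulrA (mono _)) mono_f -!mulrA mono_add mulrA.
Qed.

Lemma coef_cons p L E : coef (p :: L) E = (if p.2 == E then p.1 else 0) + coef L E.
Proof. by rewrite /coef big_cons; case: ifP; rewrite ?add0r. Qed.

Lemma regroup (U : seq exps) L : uniq U -> (forall p, p \in L -> p.2 \in U) ->
  Rsum L = \sum_(E <- U) f (coef L E) * mono E.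
Proof.
move=> uU; elim: L => [|p L IH] HL.
  by rewrite /Rsum big_nil big1 // => E _; rewrite /coef big_nil f0 mul0r.
rewrite /Rsum big_cons -/(Rsum L) IH; last by move=> q qL; apply: HL; rewrite inE qL orbT.
have pU : p.2 \in U by apply: HL; rewrite inE eqxx.
rewrite (bigD1_seq p.2) //= [in RHS](bigD1_seq p.2) //= coef_cons eqxx fD mulrDl -addrA.
congr (_ + _); congr (_ + _); apply: eq_bigr => E EP.
by rewrite coef_cons eq_sym (negbTE EP) add0r.
Qed.

Notation R := (gen_subring f a).

Lemma R1 : R 1. Proof. by move=> P [P1 PB PM] _ _. Qed.
Lemma RB x y : R x -> R y -> R (x - y).
Proof. by move=> Hx Hy P HP Hf Ha; case: (HP) => _ PB _; apply: PB; [apply: Hx|apply: Hy]. Qed.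
Lemma RM x y : R x -> R y -> R (x * y).
Proof. by move=> Hx Hy P HP Hf Ha; case: (HP) => _ _ PM; apply: PM; [apply: Hx|apply: Hy]. Qed.
Lemma Rf d : R (f d). Proof. by move=> P _ Hf _. Qed.
Lemma Ra i : R (a i). Proof. by move=> P _ _ Ha. Qed.
Lemma R0 : R 0. Proof. by rewrite -(subrr 1); apply: RB; apply: R1. Qed.
Lemma RN x : R x -> R (- x). Proof. by move=> Hx; rewrite -sub0r; apply: RB => //; apply: R0. Qed.
Lemma RD x y : R x -> R y -> R (x + y).
Proof. by move=> Hx Hy; rewrite -[y]opprK; apply: RB => //; apply: RN. Qed.
Lemma RX x k : R x -> R (x ^+ k).
Proof. by move=> Hx; elim: k => [|k IH]; [rewrite expr0; apply: R1|rewrite exprS; apply: RM]. Qed.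
Lemma Rsum_big (I : Type) (r : seq I) (P : pred I) (F : I -> S) :
  (forall i, P i -> R (F i)) -> R (\sum_(i <- r | P i) F i).
Proof. by move=> HF; apply: (@big_ind S (fun x => R x) _ _ R0 RD). Qed.
Lemma Rprod_big (I : Type) (r : seq I) (P : pred I) (F : I -> S) :
  (forall i, P i -> R (F i)) -> R (\prod_(i <- r | P i) F i).
Proof. by move=> HF; apply: (@big_ind S (fun x => R x) _ _ R1 RM). Qed.

Lemma Rmono E : R (mono E).
Proof. by apply: Rprod_big => i _; apply: RX; apply: Ra. Qed.

Lemma Rsum_in L : R (Rsum L).
Proof. by apply: Rsum_big => p _; apply: RM; [apply: Rf|apply: Rmono]. Qed.

Lemma REP x : R x -> exists L, x = Rsum L.
Proof.
move=> Hx; apply: (Hx (fun x => exists L, x = Rsum L)).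
- split.
  + by exists [:: (1, e0)]; rewrite /Rsum big_cons big_nil addr0 f1 mono0 mulr1.
  + move=> x1 y1 [L1 ->] [L2 ->]; exists (L1 ++ negL L2).
    by rewrite Rsum_cat Rsum_neg.
  + by move=> x1 y1 [L1 ->] [L2 ->]; exists (prodL L1 L2); rewrite Rsum_mul.
- by move=> d; exists [:: (d, e0)]; rewrite /Rsum big_cons big_nil addr0 mono0 mulr1.
- move=> i; exists [:: (1, edelta i 1)].
  by rewrite /Rsum big_cons big_nil addr0 f1 mul1r mono_delta expr1.
Qed.


Definition conv N (e : {ffun 'I_m -> 'I_N}) : exps := [ffun i => nat_of_ord (e i)].
Definition Ubox N : seq exps := [seq conv e | e <- enum {ffun 'I_m -> 'I_N}].

Lemma conv_inj N : injective (@conv N).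
Proof.
move=> e e' H; apply/ffunP => i; apply: val_inj.
by have := congr1 (fun g : exps => g i) H; rewrite !ffunE.
Qed.

Lemma Ubox_uniq N : uniq (Ubox N).
Proof. by rewrite map_inj_uniq ?enum_uniq //; apply: conv_inj. Qed.

Lemma Ubox_size N : size (Ubox N) = (N ^ m)%N.
Proof. by rewrite size_map -cardE card_ffun !card_ord. Qed.

Lemma memUbox N (E : exps) : E \in Ubox N <-> (forall i, E i < N)%N.
Proof.
split.
  by case/mapP => e _ ->; move=> i; rewrite ffunE ltn_ord.
move=> H; apply/mapP; exists [ffun i => Ordinal (H i)]; first by rewrite mem_enum.
by apply/ffunP => i; rewrite !ffunE.
Qed.

Lemma coef_mkcond L E : coef L E = \sum_(p <- L) (if p.2 == E then p.1 else 0).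
Proof. by rewrite /coef big_mkcond. Qed.

Lemma sum_pick (T : eqType) (r : seq T) (x : T) (F : T -> D) :
  uniq r -> x \in r -> \sum_(e <- r | e == x) F e = F x.
Proof.
by move=> ur xr; rewrite -big_filter filter_pred1_uniq // big_cons big_nil addr0.
Qed.

Lemma In_allpairs (A B : eqType) (C : Type) (g : A -> B -> C) (s1 : seq A) (s2 : seq B) x z :
  x \in s1 -> z \in s2 -> List.In (g x z) [seq g x0 z0 | x0 <- s1, z0 <- s2].
Proof.
move=> + zs; elim: s1 => [|x1 s1 IH] //; rewrite inE => /predU1P [->|xs]; rewrite allpairs_cons;
  apply: List.in_or_app; [left|right; exact: IH].
elim: s2 zs {IH} => [|z1 s2 IH2] //; rewrite inE => /predU1P [->|zs] /=; [by left|right; exact: IH2].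
Qed.

Definition rowL (y : nat * exps -> D) N j := [seq (y (j, e), e) | e <- Ubox N].


Lemma IND_of_indep : left_alg_indep f a ->
  forall L, Rsum L = 0 -> forall E, coef L E = 0.
Proof.
move=> Hind L HL E.
case: (boolP (E \in [seq p.2 | p <- L])) => [EL|EnL]; last first.
  rewrite /coef big1_seq // => p /andP [/eqP pE pL]; exfalso.
  by move: EnL; rewrite -pE map_f.
pose N := (\max_(p <- L) \max_(k < m) p.2 k).+1.
have HN p k : p \in L -> (p.2 k < N)%N.
  move=> pL; rewrite ltnS.
  apply: (leq_trans _ (@leq_bigmax_seq _ L xpredT (fun q : D * exps => \max_(k0 < m) q.2 k0) p pL (erefl true))).
  exact: (@leq_bigmax_cond _ xpredT (fun k0 => p.2 k0) k (erefl true)).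
move: HL; rewrite (@regroup (Ubox N)); last first.
  by move=> p pL; apply/memUbox => k; apply: HN.
  exact: Ubox_uniq.
rewrite /Ubox big_map big_enum /= => H0.
have H1 : \sum_(e : {ffun 'I_m -> 'I_N}) f (coef L (conv e)) * monomial a (fun i => nat_of_ord (e i)) = 0.
  apply: (etrans _ H0); apply: eq_big => e; first by rewrite inE.
  by move=> _; congr (_ * _); rewrite /mono /monomial; apply: eq_bigr => i _; rewrite ffunE.
have H2 := Hind N (fun e => coef L (conv e)) H1.
case/mapP: EL => p pL ->.
have : p.2 \in Ubox N by apply/memUbox => k; apply: HN.
by case/mapP => e _ ->; apply: H2.
Qed.

Hypothesis Ddiv : is_division_ring D.
Hypothesis Sdiv : is_division_ring S.
Hypothesis IND : forall L, Rsum L = 0 -> forall E, coef L E = 0.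

Lemma Sdom (x y : S) : x * y = 0 -> x = 0 \/ y = 0.
Proof.
move=> xy; case: (eqVneq x 0) => [->|nx]; first by left.
by right; rewrite -(mulKr (Sdiv nx) y) xy mulr0.
Qed.

Lemma SmulI (x y z : S) : x != 0 -> x * y = x * z -> y = z.
Proof. by move=> nx H; rewrite -(mulKr (Sdiv nx) y) H mulKr //; apply: Sdiv. Qed.

Lemma Smul_neq0 (x y : S) : x != 0 -> y != 0 -> x * y != 0.
Proof. by move=> nx ny; apply/eqP => /Sdom [/eqP|/eqP]; [rewrite (negbTE nx)|rewrite (negbTE ny)]. Qed.

Lemma COUNT n (s : 'I_n -> S) (x : nat -> S) (t : nat -> 'I_n -> S) :
  (forall j i, R (t j i)) -> (forall j, (j <= n)%N -> x j = \sum_(i < n) t j i * s i) ->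
  exists r : nat -> S, (forall j, R (r j)) /\ (exists2 j, (j <= n)%N & r j != 0) /\
    \sum_(j < n.+1) r j * x j = 0.
Proof.
move=> Ht Hx.
pose T j i := proj1_sig (constructive_indefinite_description _ (REP (Ht j i))).
have HT j i : t j i = Rsum (T j i) by rewrite /T; case: constructive_indefinite_description.
pose bnd (L : seq (D * exps)) := \max_(p <- L) \max_(k < m) p.2 k.
have Hbnd (L : seq (D * exps)) (p : D * exps) (k : 'I_m) : p \in L -> (p.2 k <= bnd L)%N.
  move=> pL; apply: (leq_trans _ (@leq_bigmax_seq _ L xpredT (fun q : D * exps => \max_(k0 < m) q.2 k0) p pL (erefl true))).
  exact: (@leq_bigmax_cond _ xpredT (fun k0 => p.2 k0) k (erefl true)).
pose d := (\max_(j < n.+1) \max_(i < n) bnd (T j i)).+1.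
have Hd j i p k : (j <= n)%N -> p \in T j i -> (p.2 k < d)%N.
  move=> jn pT; rewrite ltnS; apply: leq_trans (Hbnd _ _ k pT) _.
  have -> : j = Ordinal (jn : (j < n.+1)%N) by [].
  apply: leq_trans _ (@leq_bigmax_cond _ xpredT (fun j0 : 'I_n.+1 => \max_(i0 < n) bnd (T j0 i0)) (Ordinal (jn : (j < n.+1)%N)) (erefl true)).
  exact: (@leq_bigmax_cond _ xpredT (fun i0 : 'I_n => bnd (T (Ordinal (jn : (j < n.+1)%N)) i0)) i (erefl true)).
pose N := (d * (n.+1 * m).+1)%N.
pose N2 := (N + d)%N.
pose vars := [seq (j, e) | j <- iota 0 n.+1, e <- Ubox N].
have uvars : uniq vars.
  by apply: allpairs_uniq; [apply: iota_uniq|apply: Ubox_uniq|move=> [? ?] [? ?] _ _].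
pose M (i : 'I_n) (v : nat * exps) (E : exps) :=
  \sum_(q <- T v.1 i) (if eadd v.2 q.2 == E then tauE v.2 q.1 else 0).
pose eqs := [seq (fun v => M i v E) | i <- enum 'I_n, E <- Ubox N2].
have szeq : (size eqs < size vars)%N.
  rewrite !size_allpairs size_iota size_enum_ord !Ubox_size.
  by apply: ar_count.
have [y [[v0 v0in yv0] Hy]] := LA Ddiv uvars szeq.
exists (fun j => Rsum (rowL y N j)); split; first by move=> j; apply: Rsum_in.
split.
  case/allpairsP: v0in => [[j0 e0] [j0in e0in Ev]] /=; rewrite Ev /= in yv0.
  exists j0; first by move: j0in; rewrite mem_iota add0n.
  apply/eqP => H0; have := IND H0 e0; rewrite /coef /rowL big_map /= sum_pick //.
    by move/eqP; rewrite (negbTE yv0).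
  exact: Ubox_uniq.
have Hi : forall i : 'I_n, \sum_(j < n.+1) Rsum (rowL y N j) * t j i = 0.
  move=> i.
  pose Li := flatten [seq prodL (rowL y N j) (T j i) | j <- iota 0 n.+1].
  have E1 : \sum_(j < n.+1) Rsum (rowL y N j) * t j i = Rsum Li.
    rewrite [RHS]/Rsum big_flatten big_map -[iota 0 n.+1]/(index_iota 0 n.+1) big_mkord.
    by apply: eq_bigr => j _; rewrite HT Rsum_mul.
  have E2 : Rsum Li = \sum_(E <- Ubox N2) f (coef Li E) * mono E.
    apply: regroup; first exact: Ubox_uniq.
    move=> p /flattenP [l /mapP [j jin ->]] /allpairsP [[p1 q] [/= p1in qin Ep]].
    rewrite Ep /=.
    move: p1in => /mapP [e ein Ep1]; rewrite Ep1 /=.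
    have jn : (j <= n)%N by move: jin; rewrite mem_iota add0n.
    apply/memUbox => k; rewrite ffunE /N2.
    apply: leq_add; first by move/memUbox: ein; apply.
    exact: ltnW (Hd j i q k jn qin).
  have E3 : forall E, E \in Ubox N2 -> coef Li E = 0.
    move=> E Ein.
    have Hin : List.In (fun v => M i v E) eqs by apply: In_allpairs => //; rewrite mem_enum.
    rewrite -(Hy _ Hin) coef_mkcond big_flatten big_map big_allpairs.
    apply: eq_bigr => j _; rewrite big_allpairs_dep /rowL big_map.
    apply: eq_bigr => e _ /=; rewrite /M /= mulr_sumr; apply: eq_bigr => q _.
    by case: ifP; rewrite ?mulr0.
  rewrite E1 E2 big_seq big1 // => E Ein.
  by rewrite E3 // f0 mul0r.
rewrite (eq_bigr (fun j : 'I_n.+1 => \sum_(i < n) Rsum (rowL y N j) * t j i * s i)); last first.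
  move=> j _; rewrite Hx; last by rewrite -ltnS.
  by rewrite mulr_sumr; apply: eq_bigr => i _; rewrite mulrA.
by rewrite exchange_big big1 // => i _; rewrite -mulr_suml Hi mul0r.
Qed.

Lemma ORE u v : R u -> R v -> u != 0 -> v != 0 ->
  exists p q, [/\ R p, R q, p != 0, q != 0 & p * u = q * v].
Proof.
move=> Ru Rv nu nv.
pose x j := if j == 0%N then u else v.
have HR : forall j (i : 'I_1), R (x j) by move=> j _; rewrite /x; case: ifP.
have HX : forall j, (j <= 1)%N -> x j = \sum_(i < 1) x j * (fun _ => 1) i.
  by move=> j _; rewrite big_ord1 mulr1.
have [r [Rr [[j jle rj] Hs]]] := @COUNT 1 (fun _ => 1) x (fun j _ => x j) HR HX.
rewrite big_ord_recr big_ord1 /= /x /= in Hs.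
have E : r 0%N * u = - r 1%N * v by rewrite mulNr; apply/eqP; rewrite -subr_eq0 opprK Hs.
have nz : r 0%N != 0 /\ r 1%N != 0.
  case: j jle rj => [|[|j]] // _ rj.
    split => //; apply/eqP => r1; move: E; rewrite r1 oppr0 mul0r.
    by move/Sdom => [/eqP|/eqP]; [rewrite (negbTE rj)|rewrite (negbTE nu)].
  split => //; apply/eqP => r0; move: E; rewrite r0 mul0r => /esym; rewrite mulNr => /eqP.
  by rewrite oppr_eq0 => /eqP /Sdom [/eqP|/eqP]; [rewrite (negbTE rj)|rewrite (negbTE nv)].
case: nz => n0 n1.
exists (r 0%N), (- r 1%N); split => //; [exact: RN|by rewrite oppr_eq0].
Qed.

Lemma a_neq0 i : a i != 0.
Proof.
apply/eqP => ai.
have H : Rsum [:: (1, edelta i 1)] = 0.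
  by rewrite /Rsum big_cons big_nil addr0 f1 mul1r mono_delta expr1.
have := IND H (edelta i 1); rewrite /coef big_cons big_nil eqxx addr0 => /eqP.
by rewrite oner_eq0.
Qed.

Lemma V1 i0 w : R w -> (forall j, exists th, R th /\ w = a i0 ^+ j * th) -> w = 0.
Proof.
move=> Rw Hj.
have [L EL] := REP Rw; rewrite EL in Hj *.
pose N := (\max_(p <- L) p.2 i0).+1.
have HN p : p \in L -> (p.2 i0 < N)%N.
  move=> pL; rewrite ltnS.
  exact: (@leq_bigmax_seq _ L xpredT (fun q : D * exps => q.2 i0) p pL (erefl true)).
have [th [Rth Eth]] := Hj N.
have [L' EL'] := REP Rth.
have Ea : a i0 ^+ N = Rsum [:: (1, edelta i0 N)].
  by rewrite /Rsum big_cons big_nil addr0 f1 mul1r mono_delta.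
pose P := prodL [:: (1, edelta i0 N)] L'.
have H0 : Rsum (L ++ negL P) = 0 by rewrite Rsum_cat Rsum_neg /P -Rsum_mul -Ea -EL' -Eth subrr.
have HP (E : exps) : (E i0 < N)%N -> coef P E = 0.
  move=> EN; rewrite /coef big1_seq // => p /andP [/eqP Ep pP]; exfalso.
  move: pP => /allpairsP [[p1 q] [/= p1in qin Ep']].
  move: p1in; rewrite inE => /eqP Ep1.
  move: EN; rewrite -Ep Ep' /= Ep1 /= ffunE /= ffunE eqxx.
  by rewrite ltnNge leq_addr.
have HL (E : exps) : E \in [seq p.2 | p <- L] -> coef L E = 0.
  move=> /mapP [p pL ->].
  have := IND H0 p.2; rewrite /coef big_cat /= -/(coef L p.2).
  rewrite /negL big_map /= sumrN -/(coef P p.2) HP ?oppr0 ?addr0 //.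
  exact: HN.
rewrite (@regroup (undup [seq p.2 | p <- L])); last first.
  by move=> p pL; rewrite mem_undup; apply: map_f.
  exact: undup_uniq.
rewrite big_seq big1 // => E; rewrite mem_undup => /HL ->.
by rewrite f0 mul0r.
Qed.
End Generic.

Section Conv.
Variables (D S : unitRingType) (f : D -> S).
Hypothesis fD : forall x y, f (x + y) = f x + f y.
Hypothesis fM : forall x y, f (x * y) = f x * f y.
Hypothesis f1 : f 1 = 1.
Variables (m : nat) (a : 'I_m -> S) (tau : 'I_m -> D -> D).
Hypothesis acomm : forall i j, a i * a j = a j * a i.
Hypothesis aut : forall i b, a i * f b = f (tau i b) * a i.
Hypothesis tauD : forall i x y, tau i (x + y) = tau i x + tau i y.
Hypothesis tau_inj : forall i, injective (tau i).
Hypothesis IND : forall L, Rsum f a L = 0 -> forall E, coef L E = 0.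

Lemma tau0 i : tau i 0 = 0.
Proof. by apply: (addrI (tau i 0)); rewrite -tauD !addr0. Qed.

Lemma tauL_add r E x y : tauL tau r E (x + y) = tauL tau r E x + tauL tau r E y.
Proof.
elim: r => [|i r IH] //=; rewrite IH.
by elim: (E i) => [|k IHk] //=; rewrite IHk tauD.
Qed.

Lemma iter_inj (T : Type) (g : T -> T) k : injective g -> injective (iter k g).
Proof. by move=> gi; elim: k => [|k IH] x y //= /gi /IH. Qed.

Lemma tauL_inj r E : injective (tauL tau r E).
Proof.
elim: r => [|i r IH] //= x y H; apply: IH.
exact: (@iter_inj _ (tau i) (E i) (@tau_inj i) _ _ H).
Qed.

Lemma tauL0 r E : tauL tau r E 0 = 0.
Proof. by apply: (addrI (tauL tau r E 0)); rewrite -tauL_add !addr0. Qed.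

Lemma prod_rev_comm (r : seq 'I_m) (F : 'I_m -> S) :
  (forall i j, GRing.comm (F i) (F j)) ->
  \prod_(i <- rev r) F i = \prod_(i <- r) F i.
Proof.
move=> C; elim: r => [|i r IH] //; rewrite rev_cons big_rcons /= IH big_cons.
by apply: commr_sym; apply: commr_prod => j _; apply: C.
Qed.

Lemma mono_conv (E : exps m) : @mono (S^c) m a E = mono a E.
Proof.
rewrite /mono /monomial rev_prodr.
rewrite (eq_bigr (fun i => (a i ^+ E i : S))); last by move=> i _; rewrite revrX.
by apply: prod_rev_comm => i j; apply: (comm_pows acomm).
Qed.

Lemma IND_conv : forall L, @Rsum (D^c) (S^c) f m a L = 0 -> forall E, coef L E = 0.
Proof.
move=> L HL E.
pose L' := [seq (tauE tau p.2 p.1, p.2) | p <- L].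
have H0 : Rsum f a L' = 0.
  rewrite -HL /Rsum big_map; apply: eq_bigr => p _ /=.
  by rewrite mono_conv /= -mono_f.
have := IND H0 E; rewrite /coef big_map /=.
rewrite (eq_bigr (fun p => tauE tau E p.1)); last by move=> p /eqP ->.
rewrite -(big_morph _ (tauL_add _ E) (tauL0 _ E)) => H.
by apply: (@tauL_inj (index_enum 'I_m) E); rewrite H tauL0.
Qed.

Lemma gen_conv x : @gen_subring (D^c) (S^c) f m a x -> gen_subring f a x.
Proof.
move=> Hx P [P1 PB PM] Pf Pa; apply: Hx => //; split => // u v Pu Pv.
exact: PM.
Qed.

Lemma gen_unconv x : gen_subring f a x -> @gen_subring (D^c) (S^c) f m a x.
Proof.
move=> Hx P [P1 PB PM] Pf Pa; apply: Hx => //; split => // u v Pu Pv.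
exact: (PM v u).
Qed.

End Conv.

Theorem proposition2p19 (D S : unitRingType) (f : {rmorphism D -> S}) :
  injective f ->
  is_division_ring D ->
  automorphically_normalizable f ->
  is_division_ring S ->
  fg_left_D_module f.
Proof.
move=> finj Ddiv [m [a [tau [acomm [taut [tcomm [autH [indep fg]]]]]]]] Sdiv.
have fD : forall x y, f (x + y) = f x + f y by move=> x y; rewrite rmorphD.
have fM : forall x y, f (x * y) = f x * f y by move=> x y; rewrite rmorphM.
have f1 : f 1 = 1 by rewrite rmorph1.
have aut : forall i b, a i * f b = f (tau i b) * a i by move=> i b; apply: autH.
have IND := IND_of_indep fD indep.
case: fg => n [s Hs].
case: m a tau acomm taut tcomm autH indep Hs aut IND => [|m] a tau acomm taut tcomm autH indep Hs aut IND.
  exists n, s => x.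
  have [t [Rt ->]] := Hs x.
  have Ht : forall i, exists c, t i = f c.
    move=> i; have [L ->] := REP fD fM f1 acomm aut (Rt i).
    exists (\sum_(p <- L) p.1); rewrite rmorph_sum /Rsum; apply: eq_bigr => p _.
    by rewrite /mono /monomial big_ord0 mulr1.
  have [c Hc] := fin_all_exists Ht.
  by exists c; apply: eq_bigr => i _; rewrite Hc.
exfalso.
pose R := gen_subring f a.
have R0' : R 0 := R0 (f:=f) (a:=a).
have R1' : R 1 := R1 (f:=f) (a:=a).
pose a0 := a ord0.
have a0n : a0 != 0 := a_neq0 f1 IND ord0.
have a0u : a0 \is a GRing.unit := Sdiv _ a0n.
pose tS (x : S) : 'I_n -> S := proj1_sig (constructive_indefinite_description _ (Hs x)).
have HtS x : (forall i, R (tS x i)) /\ x = \sum_(i < n) tS x i * s i.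
  by rewrite /tS; case: constructive_indefinite_description.
pose Indep k (y : nat -> S) := forall r : nat -> S, (forall l, R (r l)) ->
  \sum_(l < k) r l * y l = 0 -> forall l, (l < k)%N -> r l = 0.
have Ibound : forall k y, Indep k y -> (k <= n)%N.
  move=> k y Iy; rewrite leqNgt; apply/negP => nk.
  have [r [Rr [[j jn rj] Hsum]]] := COUNT fD fM f1 acomm aut Ddiv IND
    (s := s) (x := y) (t := fun j => tS (y j)) (fun j i => (HtS (y j)).1 i)
    (fun j _ => (HtS (y j)).2).
  pose r' l := if (l < n.+1)%N then r l else 0.
  have Rr' l : R (r' l) by rewrite /r'; case: ifP => _; [apply: Rr|apply: R0'].
  have H0 : \sum_(l < k) r' l * y l = 0.
    rewrite -(big_mkord (fun _ => true) (fun l => r' l * y l)).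
    rewrite (big_cat_nat (n:=n.+1)) ?leq0n // big_mkord.
    have Z : \sum_(n.+1 <= i < k) r' i * y i = 0.
      rewrite big_nat_cond big1 // => l /andP [/andP [nl _] _].
      by rewrite /r' ltnNge nl mul0r.
    rewrite Z Monoid.mulm1 -[RHS]Hsum; apply: eq_bigr => l _.
    by rewrite /r' ltn_ord.
  have := Iy r' Rr' H0 j (leq_ltn_trans jn nk).
  by rewrite /r' ltnS jn => /eqP; rewrite (negbTE rj).
have Imax : exists k (y : nat -> S), [/\ y 0%N = 1, (0 < k)%N, Indep k y &
    forall x, exists r (p : nat -> S), [/\ R r, r != 0, forall l, R (p l) &
      r * x = \sum_(l < k) p l * y l]].
  apply: NNPP => Hno.
  have Hall : forall j, exists y, y 0%N = 1 /\ Indep j.+1 y.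
    elim=> [|j [y [y0 Iy]]].
      exists (fun _ => 1); split => // r Rr; rewrite big_ord1 mulr1 => r0 l.
      by rewrite ltnS leqn0 => /eqP ->.
    have [x Hx] : exists x, ~ exists r (p : nat -> S), [/\ R r, r != 0,
        forall l, R (p l) & r * x = \sum_(l < j.+1) p l * y l].
      apply: NNPP => H; apply: Hno; exists j.+1, y; split => // x.
      by apply: NNPP => Hx; apply: H; exists x.
    exists (fun l => if l == j.+1 then x else y l); split => //.
    move=> r Rr; rewrite big_ord_recr /= eqxx.
    rewrite (eq_bigr (fun l : 'I_j.+1 => r l * y l)); last first.
      by move=> l _; rewrite (ltn_eqF (ltn_ord l)).
    move=> Hsum.
    have rj : r j.+1 = 0.
      case: (eqVneq (r j.+1) 0) => // nz; exfalso; apply: Hx.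
      exists (r j.+1), (fun l => - r l).
      split => //; first by move=> l; apply: RN; apply: Rr.
      have E : \sum_(l < j.+1) (- r l) * y l = - \sum_(l < j.+1) r l * y l.
        by rewrite -sumrN; apply: eq_bigr => l _; rewrite mulNr.
      by apply/eqP; rewrite E -addr_eq0 addrC Hsum.
    rewrite rj mul0r addr0 in Hsum.
    move=> l; rewrite ltnS leq_eqVlt => /orP [/eqP ->|lj]; first exact: rj.
    exact: (Iy r Rr Hsum l lj).
  have [y [_ Iy]] := Hall n.
  by have := Ibound _ _ Iy; rewrite ltnn.
have [k [y [y0 kpos Iy Ymax]]] := Imax.
have Ore : forall u v, R u -> R v -> u != 0 -> v != 0 ->
    exists p q, [/\ R p, R q, p != 0, q != 0 & p * u = q * v].
  by move=> u v Ru Rv nu nv; apply: (ORE fD fM f1 acomm aut Ddiv Sdiv IND Ru Rv nu nv).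
pose C x g := exists r (p : nat -> S), [/\ R r, r != 0, forall l, R (p l),
  r * x = \sum_(l < k) p l * y l & r * g = p 0%N].
have C00 : C 0 0.
  exists 1, (fun _ => 0); split => //; first exact: oner_neq0.
    by rewrite mulr0 big1 // => l _; rewrite mul0r.
  by rewrite mulr0.
have Cuniq : forall x g g', C x g -> C x g' -> g = g'.
  move=> x g g' [r [p [Rr rn Rp Ex Eg]]] [r' [p' [Rr' rn' Rp' Ex' Eg']]].
  have [u [u' [Ru Ru' un un' E]]] := Ore _ _ Rr Rr' rn rn'.
  have Hz : \sum_(l < k) (u * p l - u' * p' l) * y l = 0.
    rewrite (eq_bigr (fun l : 'I_k => u * (p l * y l) - u' * (p' l * y l))); last first.
      by move=> l _; rewrite mulrBl !mulrA.
    by rewrite sumrB -!mulr_sumr -Ex -Ex' !mulrA E subrr.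
  have := Iy (fun l => u * p l - u' * p' l) (fun l => RB (RM Ru (Rp l)) (RM Ru' (Rp' l))) Hz 0%N kpos.
  move/eqP; rewrite subr_eq0 => /eqP E0.
  apply: (SmulI Sdiv (Smul_neq0 Sdiv un rn)).
  by rewrite -!mulrA Eg E0 -Eg' !mulrA E.
have Cadd : forall x x' g g', C x g -> C x' g' -> C (x + x') (g + g').
  move=> x x' g g' [r [p [Rr rn Rp Ex Eg]]] [r' [p' [Rr' rn' Rp' Ex' Eg']]].
  have [u [u' [Ru Ru' un un' E]]] := Ore _ _ Rr Rr' rn rn'.
  exists (u * r), (fun l => u * p l + u' * p' l); split.
  - exact: RM.
  - exact: Smul_neq0.
  - by move=> l; exact: (RD (RM Ru (Rp l)) (RM Ru' (Rp' l))).
  - rewrite mulrDr {2}E -!mulrA Ex Ex' !mulr_sumr -big_split /=.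
    by apply: eq_bigr => l _; rewrite mulrDl !mulrA.
  - by rewrite mulrDr {2}E -!mulrA Eg Eg'.
have Cmul : forall t x g, R t -> C x g -> C (t * x) (t * g).
  move=> t x g Rt [r [p [Rr rn Rp Ex Eg]]].
  case: (eqVneq t 0) => [->|tn]; first by rewrite !mul0r.
  have [u [u' [Ru Ru' un un' E]]] := Ore _ _ Rt Rr tn rn.
  exists u, (fun l => u' * p l); split => //.
  - by move=> l; exact: (RM Ru' (Rp l)).
  - by rewrite mulrA E -mulrA Ex mulr_sumr; apply: eq_bigr => l _; rewrite mulrA.
  - by rewrite mulrA E -mulrA Eg.
have Csum : forall (t g : 'I_n -> S), (forall i, R (t i)) -> (forall i, C (s i) (g i)) ->
    C (\sum_(i < n) t i * s i) (\sum_(i < n) t i * g i).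
  move=> t g Rt Cg.
  apply: (@big_ind2 S S C 0 +%R 0 +%R C00 (fun x1 x2 y1 y2 => Cadd x1 y1 x2 y2)) => i _.
  exact: Cmul.
have Ctot : forall x, exists g, C x g.
  move=> x; have [r [p [Rr rn Rp Ex]]] := Ymax x.
  exists (r^-1 * p 0%N), r, p; split => //.
  by rewrite mulrA mulrV ?mul1r //; apply: Sdiv.
have [g Cg] := fin_all_exists (fun i => Ctot (s i)).
pose b := a0^-1.
have Cainv : forall j, C (b ^+ j) (b ^+ j).
  move=> j; exists (a0 ^+ j), (fun l => if l == 0%N then 1 else 0); split.
  - exact: RX (Ra ord0).
  - by apply/negP => /eqP H; move: (unitrX j a0u); rewrite H unitr0.
  - by move=> l; case: ifP.
  - rewrite /b exprVn mulrV ?unitrX //.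
    case: k kpos {Iy Ymax Imax C C00 Cuniq Cadd Cmul Csum Ctot Cg} => // k' _.
    rewrite big_ord_recl /= y0 mulr1 big1 ?addr0 // => l _.
    by rewrite mul0r.
  - by rewrite /b exprVn mulrV ?unitrX.
(* right Ore via the converse ring *)
have [G HG] : exists G : 'I_m.+1 -> D -> D, forall i, cancel (tau i) (G i) /\ cancel (G i) (tau i).
  apply: (@fin_all_exists _ (fun _ => D -> D) (fun i h => cancel (tau i) h /\ cancel h (tau i))) => i; case: (taut i) => _ _ _ [h h1 h2].
  by exists h.
have tauD : forall i x y, tau i (x + y) = tau i x + tau i y.
  by move=> i; case: (taut i).
have tau_inj : forall i, injective (tau i).
  by move=> i; case: (taut i) => _ _ _ /bij_inj.
have INDc := IND_conv acomm aut tauD tau_inj IND.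
have RO : forall u v, R u -> R v -> u != 0 -> v != 0 ->
    exists p q, [/\ R p, R q, p != 0, q != 0 & u * p = v * q].
  move=> u v Ru Rv nu nv.
  have fMc : forall x y : D^c, f (@GRing.mul (D^c) x y) = @GRing.mul (S^c) (f x) (f y).
    by move=> x1 y1; exact: (fM y1 x1).
  have acommc : forall i j, @GRing.mul (S^c) (a i) (a j) = @GRing.mul (S^c) (a j) (a i).
    by move=> i j; exact: (acomm j i).
  have autc : forall i (b0 : D^c), @GRing.mul (S^c) (a i) (f b0) = @GRing.mul (S^c) (f (G i b0)) (a i).
    move=> i b0; have := aut i (G i b0); rewrite (HG i).2 => E.
    exact: (esym E).
  have [p [q [Rp Rq pn qn E]]] := @ORE (D^c) (S^c) f fD fMc f1 _ a G acommc autc Ddiv Sdiv INDc u v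
    (gen_unconv Ru) (gen_unconv Rv) nu nv.
  by exists p, q; split => //; apply: gen_conv.
have Rden : forall i, exists w, [/\ R w, w != 0 & R (g i * w)].
  move=> i; have [r [p [Rr rn Rp _ Eg]]] := Cg i.
  case: (eqVneq (p 0%N) 0) => [p0|pn].
    have g0 : g i = 0.
      by move: Eg; rewrite p0 => /(Sdom Sdiv) [/eqP|//]; rewrite (negbTE rn).
    by exists 1; split => //; [exact: oner_neq0|rewrite g0 mul0r].
  have [w [h [Rw Rh wn hn E]]] := RO _ _ (Rp 0%N) Rr pn rn.
  exists w; split => //.
  have -> : g i = r^-1 * p 0%N by rewrite -Eg mulKr //; apply: Sdiv.
  by rewrite -mulrA E mulKr //; apply: Sdiv.
have Wden : forall l : seq 'I_n, exists W, [/\ R W, W != 0 & forall i, i \in l -> R (g i * W)].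
  elim=> [|i l [W [RW Wn HW]]]; first by exists 1; split => //; exact: oner_neq0.
  have [w [Rw wn Hgw]] := Rden i.
  have [al [be [Ral Rbe aln ben E]]] := RO _ _ RW Rw Wn wn.
  exists (W * al); split; first exact: RM.
    exact: Smul_neq0.
  move=> j; rewrite inE => /predU1P [->|jl].
    by rewrite E mulrA; apply: RM.
  by rewrite mulrA; apply: RM => //; apply: HW.
have [W [RW Wn HW]] := Wden (enum 'I_n).
apply/negP: Wn; rewrite negbK; apply/eqP.
apply: (V1 fD fM f1 acomm aut IND (i0 := ord0) RW) => j.
have [Rt Et] := HtS (b ^+ j).
have Ebj : b ^+ j = \sum_(i < n) tS (b ^+ j) i * g i.
  apply: (Cuniq (b ^+ j) (b ^+ j) (\sum_(i < n) tS (b ^+ j) i * g i) (Cainv j)).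
  have H := Csum (tS (b ^+ j)) g Rt Cg.
  by rewrite -Et in H.
exists (b ^+ j * W); split.
  rewrite Ebj mulr_suml; apply: Rsum_big => i _; rewrite -mulrA.
  apply: (RM (Rt i)); apply: HW; by rewrite mem_enum.
by rewrite mulrA /b exprVn mulrV ?unitrX ?mul1r.
Qed.
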